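(* Fix integers $N\ge 2$ and $K\ge 1$. For every $r\in\mathbb{N}^+$, the class $M^{\text{RESCAL}}_{2r+1}$ subsumes the class $M^{\text{TransE}}_r$, i.e. $\pi(\mathcal{M}^{\text{TransE}}_r)\subseteq \pi(\mathcal{M}^{\text{RESCAL}}_{2r+1})$.
   Context: There are $N$ entities and $K$ relations. A score-based model assigns a score $s_k(i,j)\in\mathbb{R}$ to each triple (subject $i$, relation $k$, object $j$), $i,j\in\{1,\dots,N\}$, $k\in\{1,\dots,K\}$; its scoring tensor $\mathcal{S}\in\mathbb{R}^{N\times N\times K}$ has frontal slices $\mathbf{S}_k$ with $[\mathbf{S}_k]_{ij}=s_k(i,j)$. For a real $N\times N$ matrix $\mathbf{S}$, $\pi(\mathbf{S})$ is the matrix of dense ranks: $\pi_{ij}(\mathbf{S})=1+$ (number of distinct values among the entries of $\mathbf{S}$ that are strictly larger than $s_{ij}$); so larger scores get smaller ranks, and $s_{ij}\le s_{i'j'}\iff \pi_{ij}(\mathbf{S})\ge\pi_{i'j'}(\mathbf{S})$. For a tensor, $\pi$ is applied to each frontal slice; for a set $X$, $\pi(X)=\{\pi(x):x\in X\}$. RESCAL of size $r$: parameters $\mathbf{A}\in\mathbb{R}^{N\times r}$ (rows $\mathbf{a}_i$) and $\mathbf{R}_1,\dots,\mathbf{R}_K\in\mathbb{R}^{r\times r}$, score $s_k(i,j)=\mathbf{a}_i^T\mathbf{R}_k\mathbf{a}_j$. TransE of size $r$: parameters $\mathbf{A}\in\mathbb{R}^{N\times r}$ (rows $\mathbf{a}_i$),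 $\mathbf{R}\in\mathbb{R}^{K\times r}$ (rows $\mathbf{r}_k$), score $s_k(i,j)=-\|\mathbf{a}_i+\mathbf{r}_k-\mathbf{a}_j\|_2^2$. For a model type $t$, $\mathcal{M}^t_r$ denotes the set of scoring tensors of all models of type $t$ and size $r$, and $\mathcal{M}^t=\bigcup_{r\in\mathbb{N}^+}\mathcal{M}^t_r$. A class $M^{t_2}$ subsumes $M^{t_1}$ if $\pi(\mathcal{M}^{t_1})\subseteq\pi(\mathcal{M}^{t_2})$ (and analogously for classes of fixed size). *)

(* Defs.v *)
From mathcomp Require Import all_boot all_order all_algebra.
Set Implicit Arguments. Unset Strict Implicit. Unset Printing Implicit Defensive.
Import Order.TTheory GRing.Theory Num.Theory.
Local Open Scope ring_scope.

(* Entities are 'I_N, relations are 'I_K.  A scoring tensor is a family of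
   frontal slices  S : 'I_K -> 'M[R]_N  with (S k) i j = s_k(i,j). *)

Definition dense_rank (R : realDomainType) (n : nat) (S : 'M[R]_n) (i j : 'I_n) : nat :=
  (size (undup [seq S p.1 p.2 | p <- enum {: 'I_n * 'I_n} & S i j < S p.1 p.2])).+1.

Definition pi_mx (R : realDomainType) (n : nat) (S : 'M[R]_n) : 'M[nat]_n :=
  \matrix_(i, j) dense_rank S i j.

Definition pi_tensor (R : realDomainType) (n k : nat) (S : 'I_k -> 'M[R]_n)
  : 'I_k -> 'M[nat]_n := fun q => pi_mx (S q).

Definition rescal_tensor (R : realDomainType) (N K r : nat)
  (A : 'M[R]_(N, r)) (Rs : 'I_K -> 'M[R]_r) : 'I_K -> 'M[R]_N :=
  fun q => \matrix_(i, j) (row i A *m Rs q *m (row j A)^T) 0 0.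

Definition transe_tensor (R : realDomainType) (N K r : nat)
  (A : 'M[R]_(N, r)) (Rm : 'M[R]_(K, r)) : 'I_K -> 'M[R]_N :=
  fun q => \matrix_(i, j)
    - \sum_(l < r) (A i l + Rm q l - A j l) ^+ 2.

(* Main.v *)
Require Import Defs.
From mathcomp Require Import all_boot all_order all_algebra reals.
From mathcomp Require Import ring zify.
From Stdlib Require Import FunctionalExtensionality.
Import Order.TTheory GRing.Theory Num.Theory.
Local Open Scope ring_scope.

Section Aux.
Variable R : realDomainType.

Lemma split3 (r : nat) (g : nat -> R) : (1 <= r)%N ->
  (forall l, (r.+1 < l)%N -> g l = 0) ->
  \sum_(l < (2 * r).+1) g l = \sum_(l < r) g l + g r + g r.+1.
Proof.
move=> r1 g0.
rewrite -(big_mkord xpredT g) (@big_cat_nat _ _ _ r) //=; last by lia.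
rewrite big_mkord -!addrA; congr (_ + _).
rewrite big_ltn; last by lia.
rewrite big_ltn; last by lia.
rewrite big_nat_cond big1 ?addr0 // => l /andP [/andP [h1 _] _].
by apply: g0.
Qed.

Lemma rescal_entry N K n (B : 'M[R]_(N, n)) (M : 'I_K -> 'M[R]_n) q i j :
  rescal_tensor B M q i j = \sum_a \sum_b B i a * M q a b * B j b.
Proof.
rewrite /rescal_tensor mxE mxE exchange_big /=; apply: eq_bigr => a _.
rewrite !mxE big_distrl /=; apply: eq_bigr => b _.
by rewrite !mxE.
Qed.

End Aux.

Theorem theorem1 (R : realType) (N K r : nat) :
  (2 <= N)%N -> (1 <= K)%N -> (1 <= r)%N ->
  forall (A : 'M[R]_(N, r)) (Rm : 'M[R]_(K, r)),
  exists (B : 'M[R]_(N, (2 * r).+1)) (Rs : 'I_K -> 'M[R]_((2 * r).+1)),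
    pi_tensor (rescal_tensor B Rs) = pi_tensor (transe_tensor A Rm).
Proof.
move=> _ _ r1 A Rm.
pose getA (i : 'I_N) (l : nat) : R := if @insub _ (fun x => x < r)%N _ l is Some k then A i k else 0.
pose getR (q : 'I_K) (l : nat) : R := if @insub _ (fun x => x < r)%N _ l is Some k then Rm q k else 0.
pose n2 i := \sum_(k < r) A i k ^+ 2.
pose rq2 q := \sum_(k < r) Rm q k ^+ 2.
pose bv i (l : nat) : R := if (l < r)%N then getA i l else if l == r then n2 i
   else if l == r.+1 then 1 else 0.
pose Mq q (a b : nat) : R :=
  if (a < r)%N && (b < r)%N then (if a == b then 2 else 0)
  else if (a < r)%N && (b == r.+1) then -2 * getR q a
  else if (a == r) && (b == r.+1) then -1
  else if (a == r.+1) && (b == r) then -1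
  else if (a == r.+1) && (b < r)%N then 2 * getR q b
  else if (a == r.+1) && (b == r.+1) then - rq2 q
  else 0.
exists (\matrix_(i, l) bv i l), (fun q => \matrix_(a, b) Mq q a b).
rewrite /pi_tensor; apply: functional_extensionality_dep => q.
congr pi_mx; apply/matrixP => i j.
rewrite rescal_entry /transe_tensor mxE.
have gA : forall i (k : 'I_r), getA i k = A i k by move=> i' k; rewrite /getA valK.
have gR : forall (k : 'I_r), getR q k = Rm q k by move=> k; rewrite /getR valK.
under eq_bigr => a _ do under eq_bigr => b _ do rewrite !mxE.
rewrite (@split3 _ r (fun a => \sum_(b < (2 * r).+1) bv i a * Mq q a b * bv j b)) //; last first.
  move=> l hl; apply: big1 => b _.
  rewrite /bv ifN; last by lia.
  rewrite ifN; last by lia.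
  by rewrite ifN ?mul0r //; lia.
have ltr (a : 'I_r) : (a < r)%N = true by apply: ltn_ord.
have eqr (a : 'I_r) : (a == r :> nat) = false by apply/negbTE; rewrite neq_ltn ltn_ord.
have eqr1 (a : 'I_r) : (a == r.+1 :> nat) = false by apply/negbTE; rewrite neq_ltn ltnS ltnW.
have e1 : (r == r.+1) = false by lia.
have e2 : (r.+1 == r) = false by lia.
have e3 : (r.+1 < r)%N = false by lia.
have bva (i' : 'I_N) (a : 'I_r) : bv i' a = A i' a by rewrite /bv ltr gA.
have bvr (i' : 'I_N) : bv i' r = n2 i' by rewrite /bv ltnn eqxx.
have bvr1 (i' : 'I_N) : bv i' r.+1 = 1 by rewrite /bv e3 e2 eqxx.
have Mab (a b : 'I_r) : Mq q a b = if a == b then 2 else 0 by rewrite /Mq ?ltnn ?e1 ?e2 ?e3 ?eqr ?eqr1 ?ltr ?eqxx /= ?gR.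
have Mar (a : 'I_r) : Mq q a r = 0 by rewrite /Mq ?ltnn ?e1 ?e2 ?e3 ?eqr ?eqr1 ?ltr ?eqxx /= ?gR.
have Mar1 (a : 'I_r) : Mq q a r.+1 = -2 * Rm q a by rewrite /Mq ?ltnn ?e1 ?e2 ?e3 ?eqr ?eqr1 ?ltr ?eqxx /= ?gR.
have Mrb (b : 'I_r) : Mq q r b = 0 by rewrite /Mq ?ltnn ?e1 ?e2 ?e3 ?eqr ?eqr1 ?ltr ?eqxx /= ?gR.
have Mrr : Mq q r r = 0 by rewrite /Mq ?ltnn ?e1 ?e2 ?e3 ?eqr ?eqr1 ?ltr ?eqxx /= ?gR.
have Mrr1 : Mq q r r.+1 = -1 by rewrite /Mq ?ltnn ?e1 ?e2 ?e3 ?eqr ?eqr1 ?ltr ?eqxx /= ?gR.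
have Mr1b (b : 'I_r) : Mq q r.+1 b = 2 * Rm q b by rewrite /Mq ?ltnn ?e1 ?e2 ?e3 ?eqr ?eqr1 ?ltr ?eqxx /= ?gR.
have Mr1r : Mq q r.+1 r = -1 by rewrite /Mq ?ltnn ?e1 ?e2 ?e3 ?eqr ?eqr1 ?ltr ?eqxx /= ?gR.
have Mr1r1 : Mq q r.+1 r.+1 = - rq2 q by rewrite /Mq ?ltnn ?e1 ?e2 ?e3 ?eqr ?eqr1 ?ltr ?eqxx /= ?gR.
have inner a : \sum_(b < (2*r).+1) bv i a * Mq q a b * bv j b =
   \sum_(b < r) bv i a * Mq q a b * bv j b + bv i a * Mq q a r * bv j r
   + bv i a * Mq q a r.+1 * bv j r.+1.
  rewrite (@split3 _ r (fun b => bv i a * Mq q a b * bv j b)) // => l hl.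
  suff -> : bv j l = 0 by rewrite mulr0.
  rewrite /bv; case: ifP => h; first lia.
  case: ifP => h2; first lia.
  case: ifP => // h3; lia.
under eq_bigr => a _ do rewrite inner.
rewrite !inner.
have diag (a : 'I_r) : \sum_(b < r) A i a * Mq q a b * A j b = 2 * (A i a * A j a).
  rewrite (bigD1 a) //= big1 => [|b nb]; first by rewrite Mab eqxx; ring.
  by rewrite Mab eq_sym (negbTE nb) mulr0 mul0r.
rewrite (eq_bigr (fun a : 'I_r => 2 * (A i a * A j a) - 2 * (A i a * Rm q a))); last first.
  move=> a _; rewrite -diag Mar Mar1 bvr1 !bva.
  rewrite (eq_bigr (fun b : 'I_r => A i a * Mq q a b * A j b)); last by move=> b _; rewrite !bva.
  ring.
have S2 : \sum_(b<r) bv i r * Mq q r b * bv j b = 0 by rewrite big1 // => b _; rewrite Mrb mulr0 mul0r.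
have S3 : \sum_(b<r) bv i r.+1 * Mq q r.+1 b * bv j b = \sum_(b < r) 2 * (Rm q b * A j b).
  by apply: eq_bigr => b _; rewrite Mr1b bvr1 bva; ring.
have T : \sum_(l < r) (A i l + Rm q l - A j l) ^+ 2 = \sum_(l < r) (A i l ^+ 2 + Rm q l ^+ 2 + A j l ^+ 2 + 2 * (A i l * Rm q l) - 2 * (A i l * A j l) - 2 * (Rm q l * A j l)).
  by apply: eq_bigr => l _; ring.
rewrite S2 S3 T Mrr Mrr1 Mr1r Mr1r1 !bvr !bvr1.
rewrite /n2 /rq2.
rewrite !big_split /= !sumrN -!mulr_sumr.
ring.
Qed.
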